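(* Let $G$ be a full 1-plane graph satisfying the kite-edge standing assumption, let $S$ be a minimal separating set of $G$, and let $v\in S$. Let $(v,t_1)$ and $(v,t_2)$ be edges of $G$ with $t_1$ and $t_2$ in different flaps of $G-S$. Then there is a transition face $F$ of $G^\times$ incident to $v$ whose corresponding cell lies clockwise between $(v,t_1)$ and $(v,t_2)$ in $\rho_G(v)$.
   Context: A 1-plane graph is a graph $G$ with a good drawing in the plane (edges are simple curves; two edges intersect only at a common endpoint or a proper crossing; any two edges intersect at most once; no three edges cross at one point) in which every edge is crossed at most once. For a crossing of edges $(u,v)$ and $(w,x)$, its endpoints are $u,v,w,x$; two endpoints are consecutive if they are not $\{u,v\}$ and not $\{w,x\}$. $G$ is full 1-plane if for every crossing every two consecutive endpoints are adjacent. The planarization $G^\times$ replaces each crossing point by a new dummy vertex adjacent to the four endpoints. An edge joining consecutive endpoints $u,x$ of a crossing with dummy vertex $c$ is a kite edge if it is uncrossed and $G^\times$ has a face bounded exactly by it and $(u,c),(c,x)$. Standing assumption: for every crossing and every pair of adjacent consecutive endpoints, some edge joining them is a kite edge of that crossing. A separating set $S\subseteq V(G)$ is one with $G-S$ disconnected; the flaps are the connected components of $G-S$. A face $F$ of $G^\times$ is a transition face if $F$ is incident to an edge of $G^\times$ with both endpoints in $S$, or $F$ is incident to vertices from two different flaps. A cell is a connected region of the plane minus the drawing of $G$; each face of $G^\times$ corresponds to the cell occupying the same region. The rotation $\rho_G(v)$ is the clockwise cyclic order of the edges of $G$ incident to $v$ and the cells incident to $v$ around $v$ (obtained from the rotation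 at $v$ in $G^\times$ by replacing each edge by the corresponding edge of $G$ and each face by its cell). An element $y$ lies clockwise between $x$ and $z$ if $\rho_G(v)$ contains $x,y,z$ in this cyclic order. *)

(* Defs.v *)
(* Combinatorial model of a 1-plane graph via a planar
   rotation system (combinatorial map) of its planarization G^x. *)
From HB Require Import structures.
From mathcomp Require Import all_boot.

(* A map of the planarization G^x:
   - pV : all vertices of G^x (real vertices of G and dummy crossing vertices);
   - pD : darts (directed half-edges) of G^x;
   - preal : which vertices are real (vertices of G); the others are dummies;
   - ptail d : the vertex at which dart d starts;
   - prev d : the reverse dart (other half of the same edge of G^x);
   - pnxt d : the next dart clockwise around ptail d (the rotation). *)
Record pmap1 := PMap1 {
  pV : finType;
  pD : finType;
  preal : pred pV;
  ptail : pD -> pV;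
  prev : pD -> pD;
  pnxt : pD -> pD
}.

Set Implicit Arguments.
Unset Strict Implicit.
Unset Printing Implicit Defensive.

Section Defs.
Variable M : pmap1.
Local Notation V := (pV M).
Local Notation D := (pD M).
Local Notation real := (preal M).
Local Notation tail := (ptail M).
Local Notation rev := (prev M).
Local Notation nxt := (pnxt M).

Definition phead (d : D) : V := tail (rev d).
Definition dummy (c : V) : bool := ~~ real c.

(* Corners: the corner "d" is the angle at tail d lying clockwise after d
   (between d and nxt d).  Faces of G^x are the orbits of the corner
   permutation fface. *)
Definition fface (d : D) : D := rev (nxt d).

Definition rotation_system : Prop :=
  [/\ involutive rev, forall d, rev d != d, injective nxt,
      forall d, tail (nxt d) = tail d &
      forall d e, tail d = tail e -> fconnect nxt d e].

Definition map_conn : rel D :=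
  fun d e => [|| e == nxt d, d == nxt e | e == rev d].

(* Planarity (genus 0): Euler's formula  V - E + F = 2 * #components,
   written without subtraction, with #E = #D / 2. *)
Definition planar_map : Prop :=
  (2 * #|[set tail d | d : D]| + 2 * fcard fface (@predT D)
   = #|D| + 4 * n_comp map_conn (@predT D))%N.

(* Crossings: each dummy vertex has degree 4, all its neighbours are real
   (each edge is crossed at most once), the two edges through it are the
   opposite dart pairs (proper crossing), and the four endpoints are
   pairwise distinct (adjacent edges do not cross, no self-loops). *)
Definition crossings_ok : Prop :=
  forall c, dummy c ->
    [/\ #|[set d | tail d == c]| = 4,
        forall d, tail d = c -> real (phead d) &
        forall d, tail d = c ->
          uniq [:: phead d; phead (nxt d); phead (nxt (nxt d));
                   phead (nxt (nxt (nxt d)))]].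

(* Edges of G.  A G-dart is a dart d with real tail; if its head is a dummy c,
   the G-edge continues through the opposite dart at c. *)
Definition through (d : D) : D := nxt (nxt (rev d)).
Definition ghead (d : D) : V :=
  if real (phead d) then phead d else phead (through d).
Definition gadj (u w : V) : bool :=
  [exists d : D, [&& real (tail d), tail d == u & ghead d == w]].

(* Good drawing conditions not yet covered: edges of G are simple curves
   (no loops), and two edges intersect at most once (so no two edges share
   both endpoints). *)
Definition good_simple : Prop :=
  (forall d, real (tail d) -> ghead d != tail d) /\
  (forall d e, real (tail d) -> real (tail e) -> tail d = tail e ->
     ghead d = ghead e -> d = e).

Definition one_plane : Prop :=
  [/\ rotation_system, planar_map, crossings_ok & good_simple].

Definition full : Prop :=
  forall a, dummy (tail a) -> gadj (phead a) (phead (nxt a)).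

Definition same_edge (d e : D) : bool := (d == e) || (d == rev e).

Definition face_edge (d0 e : D) : bool :=
  [exists d, fconnect fface d0 d && same_edge e d].

Definition kite_edge (a g : D) : Prop :=
  [/\ real (tail g), real (phead g),
      ((tail g == phead a) && (phead g == phead (nxt a))) ||
      ((tail g == phead (nxt a)) && (phead g == phead a)) &
      exists d0 : D, forall e : D,
        face_edge d0 e = [|| same_edge e g, same_edge e a | same_edge e (nxt a)]].

Definition kite_assumption : Prop :=
  forall a, dummy (tail a) -> gadj (phead a) (phead (nxt a)) ->
    exists g, kite_edge a g.

Definition inGS (S : {set V}) (w : V) : bool := real w && (w \notin S).
Definition gs_rel (S : {set V}) : rel V :=
  fun u w => [&& inGS S u, inGS S w & gadj u w].
Definition same_flap (S : {set V}) (u w : V) : bool := connect (gs_rel S) u w.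

Definition separating (S : {set V}) : Prop :=
  {subset S <= real} /\
  exists u w, [/\ inGS S u, inGS S w & ~~ same_flap S u w].

Definition minimal_separating (S : {set V}) : Prop :=
  separating S /\ forall S' : {set V}, S' \proper S -> ~ separating S'.

Definition transition_face (S : {set V}) (d0 : D) : Prop :=
  (exists d, [/\ fconnect fface d0 d, tail d \in S & phead d \in S]) \/
  (exists d1 d2, [/\ fconnect fface d0 d1, fconnect fface d0 d2,
       inGS S (tail d1), inGS S (tail d2) & ~~ same_flap S (tail d1) (tail d2)]).

Definition cw_between (d1 c d2 : D) : Prop :=
  exists k, c = iter k nxt d1 /\ forall j, (0 < j <= k)%N -> iter j nxt d1 != d2.

End Defs.

(* Main.v *)
Require Import Defs.
From mathcomp Require Import all_boot.
From Stdlib Require Import Classical.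
Set Implicit Arguments. Unset Strict Implicit. Unset Printing Implicit Defensive.

Section S.
Lemma pmrevK (M : pmap1) : rotation_system M -> forall d, Defs.prev M (Defs.prev M d) = d.
Proof. by case=> H *. Qed.

Lemma phead_rev (M : pmap1) : rotation_system M -> forall d, phead (Defs.prev M d) = ptail M d.
Proof. by move=> HR d; rewrite /phead pmrevK. Qed.

Lemma tail_iter (M : pmap1) : rotation_system M -> forall n d, ptail M (iter n (pnxt M) d) = ptail M d.
Proof. move=> [_ _ _ Ht _] n d; elim: n => //= n IH; by rewrite Ht. Qed.

Lemma fface_inj (M : pmap1) : rotation_system M -> injective (@fface M).
Proof.
move=> [Hi _ Hn _ _] x y; rewrite /fface => /(can_inj Hi) ; exact: Hn.
Qed.

Lemma tail_conn (M : pmap1) : rotation_system M -> forall d e,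
  fconnect (pnxt M) d e -> ptail M d = ptail M e.
Proof.
move=> [_ _ _ Ht _] d e; apply: (fconnect_invariant (k := ptail M)) => x; by rewrite /= Ht eqxx.
Qed.

Lemma nxt4 (M : pmap1) : rotation_system M -> crossings_ok M -> forall a,
  dummy (ptail M a) -> iter 4 (pnxt M) a = a.
Proof.
move=> HR Hc a Hd; have [H4 _ _] := Hc _ Hd.
have Hinj : injective (pnxt M) by case: HR.
have Ho : order (pnxt M) a = 4.
  rewrite -H4 /order; apply: eq_card => d; rewrite inE; apply/idP/eqP.
    by move/(tail_conn HR) ->.
  by case: HR => _ _ _ _ Hf /esym /Hf.
by rewrite -{1}Ho iter_order.
Qed.

Lemma fixpt (M : pmap1) y e : pnxt M y = y -> fconnect (pnxt M) y e -> e = y.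
Proof.
move=> Hy; rewrite fconnect_orbit /orbit; move: (order _ _) => n.
elim: n y Hy => [|n IH] y Hy //=; rewrite inE => /orP [/eqP //|].
by rewrite Hy; exact: IH.
Qed.
End S.

Lemma same_edgeP (M : pmap1) (e f : pD M) : same_edge e f -> e = f \/ e = Defs.prev M f.
Proof. by rewrite /same_edge => /orP [/eqP|/eqP]; [left|right]. Qed.

Lemma kite_face (M : pmap1) (a g d0 : pD M) :
  rotation_system M -> dummy (ptail M a) -> preal M (phead a) ->
  preal M (phead (pnxt M a)) -> phead a != phead (pnxt M a) ->
  pnxt M (pnxt M a) != a ->
  preal M (ptail M g) -> preal M (phead g) ->
  ((ptail M g == phead a) && (phead g == phead (pnxt M a))) ||
  ((ptail M g == phead (pnxt M a)) && (phead g == phead a)) ->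
  (forall e, face_edge d0 e = [|| same_edge e g, same_edge e a | same_edge e (pnxt M a)]) ->
  fconnect (@fface M) d0 a.
Proof.
move=> HR Hc Hu Hx Hux H2 Hgt Hgh Hg H.
have rK := pmrevK HR; have phr := phead_rev HR.
have [_ Hrn Hni Hnt Hrot] := HR.
set P := fconnect (@fface M) d0.
have Pst : forall e, P e -> P (fface e).
  by move=> e Pe; apply: connect_trans Pe (fconnect1 _ _).
have Pm : forall e, P e -> [|| same_edge e g, same_edge e a | same_edge e (pnxt M a)].
  move=> e Pe; rewrite -H; apply/existsP; exists e; apply/andP; split; [exact: Pe | by rewrite /same_edge eqxx].
have Hna : pnxt M a != a.
  by apply: contraNneq Hux => ->.
have ndr : forall w, preal M w -> w <> ptail M a.
  by move=> w Hw E; move: Hc; rewrite /dummy -E Hw.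
have gE : forall y, y = g \/ y = Defs.prev M g ->
   (ptail M y = phead a /\ phead y = phead (pnxt M a)) \/
   (ptail M y = phead (pnxt M a) /\ phead y = phead a).
  move=> y Ey.
  have E1 : ptail M (Defs.prev M g) = phead g by [].
  case/orP: Hg => /andP[/eqP Et /eqP Eh]; case: Ey => ->; rewrite ?E1 ?phr ?Et ?Eh; by [left|right].
have Pra : P a \/ P (Defs.prev M a).
  have : face_edge d0 a by rewrite H /same_edge eqxx orbT.
  case/existsP=> d /andP[Pd /same_edgeP [->|E]]; first by left.
  by right; rewrite E rK.
case: Pra => // Pra.
have Py := Pst _ Pra; set y := fface (Defs.prev M a) in Py.
have hy : phead y = phead a.
  by rewrite /y /fface phr Hnt.
case/or3P: (Pm _ Py) => /same_edgeP Ey.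
-
  have ty : ptail M y = phead (pnxt M a).
    case: (gE _ Ey) => [[_ E]|[//]]; by move: Hux; rewrite -E hy eqxx.
  have Pz := Pst _ Py; set z := fface y in Pz.
  have hz : phead z = phead (pnxt M a) by rewrite /z /fface phr Hnt.
  case/or3P: (Pm _ Pz) => /same_edgeP Ez.
  +
    have : z = y \/ z = Defs.prev M y.
      case: Ey Ez => -> [->|->]; rewrite ?rK; by [left|right].
    case=> Ez'.
      by move: Hux; rewrite -hz Ez' hy eqxx.
    have Hyy : pnxt M y = y.
      by move: Ez'; rewrite /z /fface => /(can_inj rK).
    have Hc2 : fconnect (pnxt M) y (Defs.prev M (pnxt M a)).
      by apply: Hrot; rewrite ty.
    have := fixpt Hyy Hc2 => E.
    have : phead (Defs.prev M (pnxt M a)) = phead y by rewrite E.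
    rewrite phr Hnt hy => E2; by case: (ndr _ Hu).
  + case: Ez => Ez; first by rewrite -Ez.
    by move: hz; rewrite Ez phr => E; case: (ndr _ Hx).
  + case: Ez => Ez.
    * have Pw := Pst _ Pz; set w := fface z in Pw.
      have hw : phead w = ptail M a by rewrite /w /fface phr Ez !Hnt.
      case/or3P: (Pm _ Pw) => /same_edgeP Ew.
      -- case: (gE _ Ew) => [[_ E]|[_ E]]; move: hw; rewrite E => E2.
           by case: (ndr _ Hx).
         by case: (ndr _ Hu).
      -- case: Ew => Ew.
           by move: hw; rewrite Ew => E2; case: (ndr _ Hu).
         move: Ew; rewrite /w /fface Ez => /(can_inj rK) E.
         by move: H2; rewrite E eqxx.
      -- case: Ew => Ew.
           by move: hw; rewrite Ew => E2; case: (ndr _ Hx).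
         move: Ew; rewrite /w /fface Ez => /(can_inj rK) /Hni E.
         by move: Hna; rewrite E eqxx.
    * by move: hz; rewrite Ez phr Hnt => E; case: (ndr _ Hx).
- case: Ey => Ey; first by rewrite -Ey.
  move: Ey; rewrite /y /fface => /(can_inj rK) E.
  have : ptail M (pnxt M (Defs.prev M a)) = ptail M a by rewrite E.
  rewrite Hnt => E2; by case: (ndr _ Hu).
- case: Ey => Ey.
    have : ptail M (Defs.prev M y) = ptail M (Defs.prev M (pnxt M a)) by rewrite Ey.
    rewrite /y /fface rK Hnt => E2; by move: Hux; rewrite /phead E2 eqxx.
  move: Ey; rewrite /y /fface => /(can_inj rK) /Hni E.
  by move: (Hrn a); rewrite E eqxx.
Qed.

Lemma kite_SS (M : pmap1) (S : {set pV M}) (e a : pD M) :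
  rotation_system M -> crossings_ok M -> full M -> kite_assumption M ->
  dummy (ptail M a) -> fconnect (@fface M) e a ->
  phead a \in S -> phead (pnxt M a) \in S -> transition_face S e.
Proof.
move=> HR Hc Hf Hk Hd Hea HaS HxS.
have [_ Hre Hu] := Hc _ Hd.
have := Hu a erefl; rewrite /= !inE !negb_or => /andP[/and3P[Hux Hu2 _] _].
have [g Hg] := Hk _ Hd (Hf _ Hd).
case: Hg => Hgt Hgh Hge [d0 H].
have Hnt : ptail M (pnxt M a) = ptail M a by case: HR.
have Hd0 : fconnect (@fface M) d0 a.
  apply: (kite_face HR Hd (Hre a erefl) (Hre _ Hnt) Hux _ Hgt Hgh Hge H).
  by apply: contraNneq Hu2 => ->.
have : face_edge d0 g by rewrite H /same_edge eqxx.
case/existsP => d /andP[Pd Sd].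
have rK := pmrevK HR.
have Hdd : d = g \/ d = Defs.prev M g.
  by case/same_edgeP: Sd => E; [left|right]; rewrite E ?rK.
have Ends : ptail M d \in S /\ phead d \in S.
  have Ef : ptail M (Defs.prev M g) = phead g by [].
  case/orP: Hge => /andP[/eqP E1 /eqP E2]; case: Hdd => ->;
    rewrite ?Ef ?(phead_rev HR) ?E1 ?E2; by split.
case: Ends => T1 T2.
left; exists d; split => //.
apply: connect_trans Hea _; apply: connect_trans _ Pd.
by rewrite fconnect_sym //; exact: fface_inj.
Qed.

Definition llink (M : pmap1) (e : pD M) (l : pV M) : Prop :=
  if preal M (phead e) then l = phead e
  else l = phead (iter 3 (pnxt M) (Defs.prev M e)).
Definition rlink (M : pmap1) (e : pD M) (r : pV M) : Prop :=
  if preal M (phead e) then r = phead e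
  else r = phead (pnxt M (Defs.prev M e)).

Lemma left_l (M : pmap1) (S : {set pV M}) (e : pD M) :
  rotation_system M -> crossings_ok M -> full M -> kite_assumption M ->
  ptail M e \in S -> ~ transition_face S e ->
  exists l, [/\ inGS S l, (exists q, fconnect (@fface M) e q /\ ptail M q = l)
              & llink e l].
Proof.
move=> HR Hc Hf Hk vS NT.
have rK := pmrevK HR.
have finj := fface_inj HR.
have Hnt : forall d, ptail M (pnxt M d) = ptail M d by case: HR.
rewrite /llink; case Hr: (preal M (phead e)).
- exists (phead e); split => //.
  + rewrite /inGS Hr /=; apply/negP => HS; apply: NT; left; exists e; split => //.
  + exists (finv (@fface M) e); split; first exact: fconnect_finv.
    have := f_finv finj e; rewrite /fface => E.
    have E' : pnxt M (finv (@fface M) e) = Defs.prev M e by apply: (can_inj rK); rewrite rK; exact: E.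
    by rewrite -Hnt E'.
- set a' := Defs.prev M e; set p := iter 3 (pnxt M) a'.
  have Hdp : dummy (ptail M p) by rewrite /p tail_iter // /dummy Hr.
  have fp : fface p = e.
    rewrite /fface; change (Defs.prev M (iter 4 (pnxt M) a') = e).
    rewrite nxt4 // ?rK // /dummy /a' /=; exact: negbT.
  have Hep : fconnect (@fface M) e p by rewrite fconnect_sym // -fp fconnect1.
  have [_ Hre _] := Hc _ Hdp.
  exists (phead p); split => //.
  + rewrite /inGS (Hre p erefl) /=; apply/negP => HS; apply: NT.
    apply: (kite_SS HR Hc Hf Hk Hdp Hep HS).
    change (phead (iter 4 (pnxt M) a') \in S).
    rewrite nxt4 // ?(phead_rev HR) // /dummy /a' /=; exact: negbT.
  + exists (finv (@fface M) p); split.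
      apply: connect_trans Hep (fconnect_finv _ _).
    have := f_finv finj p; rewrite /fface => E.
    have E' : pnxt M (finv (@fface M) p) = Defs.prev M p by apply: (can_inj rK); rewrite rK; exact: E.
    by rewrite -Hnt E'.
Qed.

Lemma right_l (M : pmap1) (S : {set pV M}) (e : pD M) :
  rotation_system M -> crossings_ok M -> full M -> kite_assumption M ->
  ptail M e \in S -> ~ transition_face S e ->
  exists r, [/\ inGS S r, (exists q, fconnect (@fface M) e q /\ ptail M q = r)
              & rlink (pnxt M e) r].
Proof.
move=> HR Hc Hf Hk vS NT.
have rK := pmrevK HR.
have Hnt : forall d, ptail M (pnxt M d) = ptail M d by case: HR.
rewrite /rlink; case Hr: (preal M (phead (pnxt M e))).
- exists (phead (pnxt M e)); split => //.
  + rewrite /inGS Hr /=; apply/negP => HS; apply: NT; left.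
    exists (Defs.prev M (pnxt M e)); split => //; first exact: fconnect1.
    by rewrite (phead_rev HR) Hnt.
  + exists (Defs.prev M (pnxt M e)); split => //; exact: fconnect1.
- set a := Defs.prev M (pnxt M e).
  have Hda : dummy (ptail M a) by rewrite /dummy /a /= Hr.
  have Hea : fconnect (@fface M) e a by exact: fconnect1.
  have [_ Hre _] := Hc _ Hda.
  exists (phead (pnxt M a)); split => //.
  + rewrite /inGS (Hre _ (Hnt a)) /=; apply/negP => HS; apply: NT.
    apply: (kite_SS HR Hc Hf Hk Hda Hea) => //.
    by rewrite /a (phead_rev HR) Hnt.
  + exists (fface a); split.
      by apply: connect_trans Hea (fconnect1 _ _).
    by rewrite /fface.
Qed.

Lemma face_l (M : pmap1) (S : {set pV M}) (e q1 q2 : pD M) :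
  ~ transition_face S e -> fconnect (@fface M) e q1 -> fconnect (@fface M) e q2 ->
  inGS S (ptail M q1) -> inGS S (ptail M q2) ->
  same_flap S (ptail M q1) (ptail M q2).
Proof.
move=> NT H1 H2 G1 G2; apply/negPn/negP => nf; apply: NT; right.
by exists q1, q2; split.
Qed.

Lemma link_l (M : pmap1) (S : {set pV M}) (e : pD M) r l :
  rotation_system M -> crossings_ok M ->
  rlink e r -> llink e l -> inGS S r -> inGS S l -> connect (gs_rel S) r l.
Proof.
move=> HR Hc; rewrite /rlink /llink; case: ifP => Hr.
  by move=> -> -> _ _; exact: connect0.
move=> -> -> Gr Gl; apply: connect1; rewrite /gs_rel Gr Gl /=.
have rK := pmrevK HR.
have Hnt : forall d, ptail M (pnxt M d) = ptail M d by case: HR.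
apply/existsP; exists (Defs.prev M (pnxt M (Defs.prev M e))).
apply/and3P; split => //.
- by case/andP: Gr.
- rewrite /ghead (phead_rev HR) Hnt /= Hr /through rK //.
Qed.

Lemma start_l (M : pmap1) (S : {set pV M}) (d : pD M) l :
  rotation_system M -> full M ->
  llink d l -> inGS S l -> inGS S (ghead d) -> connect (gs_rel S) (ghead d) l.
Proof.
move=> HR Hf; rewrite /llink /ghead; case: ifP => Hr.
  by move=> -> _ _; exact: connect0.
move=> El Gl Gg; apply: connect1; rewrite /gs_rel Gl Gg /= El /through.
have Hnt : forall d, ptail M (pnxt M d) = ptail M d by case: HR.
apply: Hf; rewrite /dummy !Hnt /= Hr //.
Qed.

Lemma end_l (M : pmap1) (S : {set pV M}) (d : pD M) r :
  rotation_system M -> full M ->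
  rlink d r -> inGS S r -> inGS S (ghead d) -> connect (gs_rel S) r (ghead d).
Proof.
move=> HR Hf; rewrite /rlink /ghead; case: ifP => Hr.
  by move=> -> _ _; exact: connect0.
move=> El Gl Gg; apply: connect1; rewrite /gs_rel Gl Gg /= El /through.
have Hnt : forall d, ptail M (pnxt M d) = ptail M d by case: HR.
apply: Hf; rewrite /dummy !Hnt /= Hr //.
Qed.

Theorem claim2 (M : pmap1) (S : {set pV M}) (v : pV M) (d1 d2 : pD M) :
  one_plane M -> full M -> kite_assumption M ->
  minimal_separating S -> v \in S ->
  ptail M d1 = v -> ptail M d2 = v ->
  inGS S (ghead d1) -> inGS S (ghead d2) -> ~~ same_flap S (ghead d1) (ghead d2) ->
  exists c : pD M,
    [/\ ptail M c = v, transition_face S c & cw_between d1 c d2].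
Proof.
move=> [HR _ Hc _] Hf Hk _ vS Hd1 Hd2 G1 G2 NF.
have Hn : fconnect (pnxt M) d1 d2 by case: HR => _ _ _ _ Hr; apply: Hr; rewrite Hd1 Hd2.
have ne : d1 != d2.
  by apply: contraNneq NF => ->; exact: connect0.
have ex : exists n, (0 < n) && (iter n (pnxt M) d1 == d2).
  exists (findex (pnxt M) d1 d2); rewrite iter_findex // eqxx andbT lt0n.
  by apply: contraNneq ne => E; rewrite -(iter_findex Hn) E.
case: (ex_minnP ex) => m /andP[m0 /eqP Em] Hmin.
case: (classic (exists c : pD M,
    [/\ ptail M c = v, transition_face S c & cw_between d1 c d2])) => // Hno.
exfalso.
have NT : forall k, k < m -> ~ transition_face S (iter k (pnxt M) d1).
  move=> k km Ht; apply: Hno; exists (iter k (pnxt M) d1); split => //.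
    by rewrite tail_iter.
  exists k; split => // j /andP[j0 jk]; apply/negP => /eqP Ej.
  have := Hmin j; rewrite j0 Ej eqxx => /(_ isT) mj.
  by move: (leq_ltn_trans (leq_trans mj jk) km); rewrite ltnn.
have vS' : forall k, ptail M (iter k (pnxt M) d1) \in S.
  by move=> k; rewrite tail_iter // Hd1.
have claim : forall i, i < m -> exists r, [/\ inGS S r,
    connect (gs_rel S) (ghead d1) r & rlink (iter i.+1 (pnxt M) d1) r].
  elim=> [|i IH] im.
  - have [l [Gl [q1 [F1 T1]] Ll]] := left_l HR Hc Hf Hk (vS' 0) (NT 0 im).
    have [r [Gr [q2 [F2 T2]] Rr]] := right_l HR Hc Hf Hk (vS' 0) (NT 0 im).
    exists r; split => //.
    apply: connect_trans (start_l HR Hf Ll Gl G1) _.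
    have := face_l (NT 0 im) F1 F2; rewrite T1 T2; exact.
  - have [r0 [Gr0 C0 R0]] := IH (ltnW im).
    have [l [Gl [q1 [F1 T1]] Ll]] := left_l HR Hc Hf Hk (vS' i.+1) (NT _ im).
    have [r [Gr [q2 [F2 T2]] Rr]] := right_l HR Hc Hf Hk (vS' i.+1) (NT _ im).
    exists r; split => //.
    apply: connect_trans C0 _; apply: connect_trans (link_l HR Hc R0 Ll Gr0 Gl) _.
    have := face_l (NT _ im) F1 F2; rewrite T1 T2; exact.
have [r [Gr C R]] := claim m.-1 ltac:(by rewrite prednK ?leqnn // ltn_predL).
move: R; rewrite prednK // Em => R.
move/negP: NF; apply; apply: connect_trans C (end_l HR Hf R Gr G2).
Qed.
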